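(* Let $\Sigma\in\mathbb{R}^{n\times n}$ be symmetric positive definite, let $C_0\in\mathbb{R}^{n\times n}$ be symmetric positive semidefinite, and define $C_{i+1}=\Sigma-\Sigma(C_i+\Sigma)^{-1}\Sigma$ for $i\ge0$. If $\tilde w\ne0$ and $\tilde\delta_i$ satisfy $C_i\tilde w=\tilde\delta_i\Sigma\tilde w$, then $C_{i+1}\tilde w=\tilde\delta_{i+1}\Sigma\tilde w$ with $\tilde\delta_{i+1}=\tilde\delta_i/(1+\tilde\delta_i)$.
   Context: In the paper $C_0=H\Gamma_0H^\top$, where $\Gamma_0$ is the empirical covariance of the initial EKI ensemble and $H$ is the linear observation operator; $C_i$ is an idealized observation-space covariance for stochastic EKI. *)

(* Defs.v *)
From mathcomp Require Import all_boot all_order all_algebra.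
Set Implicit Arguments. Unset Strict Implicit. Unset Printing Implicit Defensive.
Import Order.TTheory GRing.Theory Num.Theory.
Local Open Scope ring_scope.

Definition symmetric_mx (R : ringType) (n : nat) (A : 'M[R]_n) : Prop := A^T = A.

Definition posdef_mx (R : realFieldType) (n : nat) (A : 'M[R]_n) : Prop :=
  symmetric_mx A /\ forall x : 'cV[R]_n, x != 0 -> 0 < (x^T *m A *m x) 0 0.

Definition psd_mx (R : realFieldType) (n : nat) (A : 'M[R]_n) : Prop :=
  symmetric_mx A /\ forall x : 'cV[R]_n, 0 <= (x^T *m A *m x) 0 0.

Fixpoint Cseq (R : realFieldType) (n : nat) (Sigma C0 : 'M[R]_n) (i : nat) : 'M[R]_n :=
  match i with
  | 0 => C0
  | i'.+1 => Sigma - Sigma *m invmx (Cseq Sigma C0 i' + Sigma) *m Sigma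
  end.

(* Main.v *)
Require Import Defs.
From mathcomp Require Import all_boot all_order all_algebra.
From mathcomp Require Import ring.
Import Order.TTheory GRing.Theory Num.Theory.
Set Implicit Arguments. Unset Strict Implicit.
Local Open Scope ring_scope.

Definition qf (R : realFieldType) (n : nat) (A : 'M[R]_n) (x : 'cV[R]_n) : R :=
  (x^T *m A *m x) 0 0.

Lemma qfD (R : realFieldType) (n : nat) (A B : 'M[R]_n) x :
  qf (A + B) x = qf A x + qf B x.
Proof. by rewrite /qf mulmxDr mulmxDl mxE. Qed.

Lemma unit_of (R : realFieldType) (n : nat) (M : 'M[R]_n) :
  (forall x : 'cV[R]_n, M *m x = 0 -> x = 0) -> M \in unitmx.
Proof.
move=> H; rewrite -unitmx_tr -row_free_unit -kermx_eq0.
apply/eqP/row_matrixP => i; rewrite row0.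
have := row_sub i (kermx M^T); rewrite sub_kermx => /eqP Hr.
have : M *m (row i (kermx M^T))^T = 0.
  by rewrite -[M]trmxK -trmx_mul trmxK Hr trmx0.
by move/H => /(congr1 trmx); rewrite trmxK trmx0.
Qed.

Lemma unit_sum (R : realFieldType) (n : nat) (C S : 'M[R]_n) :
  (forall x, 0 <= qf C x) -> (forall x : 'cV[R]_n, x != 0 -> 0 < qf S x) ->
  C + S \in unitmx.
Proof.
move=> HC HS; apply: unit_of => x Hx; apply/eqP; apply: contraT => nx.
have : qf (C + S) x = 0 by rewrite /qf -mulmxA Hx mulmx0 mxE.
rewrite qfD => /eqP; rewrite gt_eqF //.
by rewrite ltr_wpDl // ?HC // HS.
Qed.

Lemma psd_step (R : realFieldType) (n : nat) (C S : 'M[R]_n) :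
  (forall x, 0 <= qf C x) -> (forall x : 'cV[R]_n, x != 0 -> 0 < qf S x) ->
  forall x, 0 <= qf (S - S *m invmx (C + S) *m S) x.
Proof.
move=> HC HS x.
have HU := unit_sum HC HS.
have HS' : forall y, 0 <= qf S y.
  by move=> y; case: (eqVneq y 0) => [->|/HS/ltW//]; rewrite /qf mulmx0 mxE.
set b := invmx (C + S) *m S *m x.
set a := x - b.
have Mb : (C + S) *m b = S *m x by rewrite /b -mulmxA mulKVmx.
have Cb : C *m b = S *m a.
  by move: Mb; rewrite mulmxDl /a mulmxBr => <-; rewrite addrK.
have Ex : (S - S *m invmx (C + S) *m S) *m x = S *m a.
  by rewrite mulmxBl /a mulmxBr /b !mulmxA.
have xab : x = a + b by rewrite /a subrK.
clearbody a b.
rewrite /qf -mulmxA Ex {1}xab.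
have -> : (a + b)^T *m (S *m a) = a^T *m S *m a + b^T *m C *m b.
  by rewrite linearD mulmxDl mulmxA -(mulmxA b^T) -Cb mulmxA.
rewrite mxE; apply: addr_ge0; [exact: HS' a | exact: HC b].
Qed.

Lemma Cseq_psd (R : realFieldType) (n : nat) (Sigma C0 : 'M[R]_n) i :
  posdef_mx Sigma -> psd_mx C0 -> forall x, 0 <= qf (Cseq Sigma C0 i) x.
Proof.
move=> [_ HS] [_ HC]; elim: i => [|i IH] //=.
exact: psd_step.
Qed.

Theorem proposition4p2 (R : realFieldType) (n : nat) (Sigma C0 : 'M[R]_n)
  (i : nat) (w : 'cV[R]_n) (delta : R) :
  posdef_mx Sigma -> psd_mx C0 ->
  w != 0 ->
  Cseq Sigma C0 i *m w = delta *: (Sigma *m w) ->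
  Cseq Sigma C0 i.+1 *m w = (delta / (1 + delta)) *: (Sigma *m w).
Proof.
move=> HS HC nw Hd.
have HU := unit_sum (Cseq_psd i HS HC) HS.2.
set M := Cseq Sigma C0 i + Sigma.
have HM : M *m w = (1 + delta) *: (Sigma *m w).
  by rewrite /M mulmxDl Hd scalerDl scale1r addrC.
have nd : 1 + delta != 0.
  apply/eqP => e; move: HM; rewrite e scale0r => Hw.
  by move: nw; rewrite -(mulKmx HU w) Hw mulmx0 eqxx.
have HSw : Sigma *m w = (1 + delta)^-1 *: (M *m w).
  by rewrite HM scalerA mulVf // scale1r.
have Hinv : invmx M *m (Sigma *m w) = (1 + delta)^-1 *: w.
  by rewrite HSw -scalemxAr mulKmx.
rewrite /= -/M mulmxBl -!mulmxA Hinv -scalemxAr.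
rewrite -{1}(scale1r (Sigma *m w)) -scalerBl; congr (_ *: _).
by field; exact: nd.
Qed.
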